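(* Let $G$ be a t.d.l.c. group acting Weyl-transitively on a locally finite thick building $\Delta$ with compact stabilisers. Then $G$ has the double coset property and, in particular, $G$ is $N$-compact.
   Context: $\Delta=(\mathcal{C},\delta)$ is a building of type $(W,S)$ ($S$ finite), locally finite if $\{d\mid\delta(c,d)=s\}$ is finite for all $c\in\mathcal{C}$, $s\in S$, and thick if every $\{s\}$-residue ($s\in S$) contains at least three chambers. $G$ acts via a continuous homomorphism to the group of type-preserving automorphisms of $\Delta$ with the permutation topology, and chamber stabilisers are compact. The action is Weyl-transitive if for each $w\in W$, $G$ acts transitively on $\{(c,d)\in\mathcal{C}\times\mathcal{C}\mid\delta(c,d)=w\}$. For a compact open subgroup $\mathcal{O}\le G$ let $\mu_\mathcal{O}$ be the left Haar measure with $\mu_\mathcal{O}(\mathcal{O})=1$ and $R_\mathcal{O}(n)=|\{\mathcal{O}g\mathcal{O}\in\mathcal{O}\backslash G/\mathcal{O}\mid\mu_\mathcal{O}(\mathcal{O}g\mathcal{O})=n\}|$. $G$ has the double coset property if $R_\mathcal{O}(n)<\infty$ for every $n\ge1$ (this is independent of the choice of $\mathcal{O}$). $G$ is $N$-compact if every compact open subgroup of $G$ has compact normaliser. *)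

(* Defs.v *)
From HB Require Import structures.
From mathcomp Require Import all_boot all_order.
From mathcomp Require Import all_classical all_reals all_analysis.

Set Implicit Arguments.
Unset Strict Implicit.
Unset Printing Implicit Defensive.

Local Open Scope classical_set_scope.

Definition is_group (T : Type) (mul : T -> T -> T) (one : T) (inv : T -> T) :=
  [/\ associative mul, left_id one mul, right_id one mul,
      left_inverse one inv mul & right_inverse one inv mul].

Fixpoint gpow (T : Type) (mul : T -> T -> T) (one : T) (x : T) (n : nat) : T :=
  if n is n'.+1 then mul x (gpow mul one x n') else one.

Definition wprod (T : Type) (mul : T -> T -> T) (one : T) (s : seq T) : T :=
  foldr mul one s.

Definition is_subgroup (T : Type) (mul : T -> T -> T) (one : T) (inv : T -> T)
  (H : set T) :=
  [/\ H one, (forall x y, H x -> H y -> H (mul x y)) & (forall x, H x -> H (inv x))].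

(* S generates W (as a monoid; S consists of involutions) *)
Definition generates (W : Type) (mulW : W -> W -> W) (oneW : W) (S : set W) :=
  forall w, exists s : seq W, (forall i, (i < size s)%N -> S (nth oneW s i)) /\ wprod mulW oneW s = w.

(* (W,S) is a Coxeter system: W is a group, S a set of involutions generating W,
   and W has the presentation < S | (st)^{m(s,t)} = 1 >, where m(s,t) is the order
   of st in W; i.e. any map f from S into a group H satisfying every relation
   (st)^m = 1 holding in W extends to a homomorphism W -> H. *)
Definition coxeter_system (W : Type) (mulW : W -> W -> W) (oneW : W) (invW : W -> W)
  (S : set W) :=
  [/\ is_group mulW oneW invW,
      (forall s, S s -> s <> oneW /\ mulW s s = oneW),
      generates mulW oneW S &
      forall (H : Type) (mulH : H -> H -> H) (oneH : H) (invH : H -> H) (f : W -> H),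
        is_group mulH oneH invH ->
        (forall s t (m : nat), S s -> S t ->
            gpow mulW oneW (mulW s t) m = oneW ->
            gpow mulH oneH (mulH (f s) (f t)) m = oneH) ->
        exists phi : W -> H,
          (forall x y, phi (mulW x y) = mulH (phi x) (phi y)) /\
          (forall s, S s -> phi s = f s)].

Definition word_of_length (W : Type) (mulW : W -> W -> W) (oneW : W) (S : set W)
  (w : W) (n : nat) :=
  exists s : seq W, [/\ size s = n, (forall i, (i < size s)%N -> S (nth oneW s i)) & wprod mulW oneW s = w].

Definition coxeter_length (W : Type) (mulW : W -> W -> W) (oneW : W) (S : set W)
  (w : W) (n : nat) :=
  word_of_length mulW oneW S w n /\
  forall m, word_of_length mulW oneW S w m -> (n <= m)%N.

Definition is_building (W : Type) (mulW : W -> W -> W) (oneW : W) (S : set W)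
  (C : Type) (delta : C -> C -> W) :=
  [/\ (exists c : C, True),
      (forall c d, delta c d = oneW <-> c = d),
      (forall c d c' s, S s -> delta c' c = s ->
          (delta c' d = mulW s (delta c d) \/ delta c' d = delta c d) /\
          (forall n, coxeter_length mulW oneW S (delta c d) n ->
                     coxeter_length mulW oneW S (mulW s (delta c d)) n.+1 ->
                     delta c' d = mulW s (delta c d))) &
      (forall c d s, S s -> exists c', delta c' c = s /\ delta c' d = mulW s (delta c d))].

Definition locally_finite_building (W : Type) (S : set W) (C : Type)
  (delta : C -> C -> W) :=
  forall c s, S s -> finite_set [set d | delta c d = s].

(* the {s}-residue of c is {d | delta c d \in {1, s}}; thick: it has >= 3 chambers *)
Definition thick_building (W : Type) (oneW : W) (S : set W) (C : Type)
  (delta : C -> C -> W) :=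
  forall c s, S s ->
    exists d1 d2 d3 : C,
      [/\ delta c d1 = oneW \/ delta c d1 = s,
          delta c d2 = oneW \/ delta c d2 = s,
          delta c d3 = oneW \/ delta c d3 = s &
          [/\ d1 <> d2, d1 <> d3 & d2 <> d3]].

Definition topological_group (G : topologicalType) (mul : G -> G -> G) (one : G)
  (inv : G -> G) :=
  [/\ is_group mul one inv,
      continuous (fun p : G * G => mul p.1 p.2) & continuous inv].

Definition tdlc (G : topologicalType) :=
  [/\ hausdorff_space G, locally_compact [set: G] & totally_disconnected [set: G]].

Definition compact_open_subgroup (G : topologicalType) (mul : G -> G -> G) (one : G)
  (inv : G -> G) (O : set G) :=
  [/\ is_subgroup mul one inv O, compact O & open O].

Definition type_preserving_action (G : Type) (mul : G -> G -> G) (one : G)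
  (W : Type) (C : Type) (delta : C -> C -> W) (rho : G -> C -> C) :=
  [/\ (forall c, rho one c = c),
      (forall g h c, rho (mul g h) c = rho g (rho h c)) &
      (forall g c d, delta (rho g c) (rho g d) = delta c d)].

(* continuity of rho into Aut(Delta) with the permutation topology, whose basic
   neighbourhoods of phi are {psi | psi = phi on F}, F finite *)
Definition perm_continuous (G : topologicalType) (C : Type) (rho : G -> C -> C) :=
  forall (g : G) (F : set C), finite_set F ->
    \forall h \near g, forall c, F c -> rho h c = rho g c.

Definition compact_stabilisers (G : topologicalType) (C : Type) (rho : G -> C -> C) :=
  forall c : C, compact [set g : G | rho g c = c].

Definition weyl_transitive (G : Type) (W : Type) (C : Type) (delta : C -> C -> W)
  (rho : G -> C -> C) :=
  forall c d c' d', delta c d = delta c' d' ->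
    exists g, rho g c = c' /\ rho g d = d'.

Definition lcoset (G : Type) (mul : G -> G -> G) (h : G) (O : set G) : set G :=
  [set mul h x | x in O].

Definition double_coset (G : Type) (mul : G -> G -> G) (O : set G) (g : G) : set G :=
  [set mul (mul a g) b | a in O & b in O].

(* mu_O(D) = n for a union D of left O-cosets, mu_O the left Haar measure with
   mu_O(O) = 1: D is the disjoint union of exactly n left cosets hO. *)
Definition haar_measure_is (G : Type) (mul : G -> G -> G) (O : set G) (D : set G)
  (n : nat) :=
  ([set K : set G | exists h, K = lcoset mul h O /\ K `<=` D] #= `I_n)%card.

Definition double_coset_property (G : topologicalType) (mul : G -> G -> G) (one : G)
  (inv : G -> G) :=
  forall O : set G, compact_open_subgroup mul one inv O ->
    forall n : nat, (1 <= n)%N ->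
      finite_set [set D : set G | (exists g, D = double_coset mul O g) /\
                                  haar_measure_is mul O D n].

Definition normaliser (G : Type) (mul : G -> G -> G) (inv : G -> G) (O : set G) : set G :=
  [set g | forall x, O x <-> O (mul (mul g x) (inv g))].

Definition N_compact (G : topologicalType) (mul : G -> G -> G) (one : G)
  (inv : G -> G) :=
  forall O : set G, compact_open_subgroup mul one inv O ->
    compact (normaliser mul inv O).

(* Main.v *)
Require Import Defs.
From HB Require Import structures.
From mathcomp Require Import all_boot all_order.
From mathcomp Require Import all_classical all_reals all_analysis.
From mathcomp Require Import zify.
From mathcomp Require Import finmap.
Set Implicit Arguments. Unset Strict Implicit. Unset Printing Implicit Defensive.
Local Open Scope classical_set_scope.
Section Bld.
Variables (W : Type) (mulW : W -> W -> W) (oneW : W) (invW : W -> W) (S : set W)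
  (C : Type) (delta : C -> C -> W).
Hypothesis HW : coxeter_system mulW oneW invW S.
Hypothesis HB : is_building mulW oneW S delta.
Hypothesis HT : thick_building oneW S delta.

Lemma cl_uniq w k k' : coxeter_length mulW oneW S w k ->
  coxeter_length mulW oneW S w k' -> k = k'.
Proof.
move=> [h1 m1] [h2 m2]; apply/eqP; rewrite eqn_leq; by rewrite m1 // m2.
Qed.

Lemma cl_exists w : exists k, coxeter_length mulW oneW S w k.
Proof.
case: HW => _ _ gen _.
have hex : exists k, `[< word_of_length mulW oneW S w k >].
  have [s [Hs Hw]] := gen w; exists (size s); apply/asboolP; exists s; by split.
case: (ex_minnP hex) => k /asboolP Hk Hmin; exists k; split => // m Hm.
by apply: Hmin; apply/asboolP.
Qed.

Lemma cl0 w : coxeter_length mulW oneW S w 0 -> w = oneW.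
Proof. by move=> [[s [Hs _ <-]] _]; case: s Hs. Qed.

Lemma clS w k : coxeter_length mulW oneW S w k.+1 ->
  exists x w', [/\ S x, w = mulW x w' & coxeter_length mulW oneW S w' k].
Proof.
move=> [[s [Hs HS Hw]] Hmin]; case: s Hs HS Hw => [//|x r] /= [Hr] HS Hw.
exists x, (wprod mulW oneW r); split => //.
- by have := HS 0%N; apply.
- split.
    exists r; split => // i Hi; have := HS i.+1; apply; by [].
  move=> m [r' [Hr' HS' Hw']].
  have : (k.+1 <= m.+1)%N.
    apply: Hmin; exists (x :: r'); split; first by rewrite /= Hr'.
      by case=> [|i] /= Hi; [exact: (HS 0%N)| apply: HS'].
    by rewrite /= Hw'.
  by [].
Qed.


Lemma grpW : is_group mulW oneW invW. Proof. by case: HW. Qed.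
Lemma invol x : S x -> x <> oneW /\ mulW x x = oneW. Proof. by case: HW => _ h _ _; apply: h. Qed.
Lemma wd1 c d : delta c d = oneW <-> c = d. Proof. by case: HB => _ h _ _; apply: h. Qed.
Lemma wd2 c d c' s : S s -> delta c' c = s ->
          (delta c' d = mulW s (delta c d) \/ delta c' d = delta c d) /\
          (forall n, coxeter_length mulW oneW S (delta c d) n ->
                     coxeter_length mulW oneW S (mulW s (delta c d)) n.+1 ->
                     delta c' d = mulW s (delta c d)).
Proof. by case: HB => _ _ h _; apply: h. Qed.

Lemma dcc c : delta c c = oneW. Proof. by apply/wd1. Qed.

Lemma solve_x x y : S x -> oneW = mulW x y -> y = x.
Proof.
move=> Sx e; have [_ xx] := invol Sx; case: grpW => A L R _ _.
by rewrite -[y]L -xx -A -e R.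
Qed.

Lemma delta_sym_s c c1 x : S x -> delta c c1 = x -> delta c1 c = x.
Proof.
move=> Sx e; have [[h|h] _] := @wd2 c1 c c _ Sx e; rewrite dcc in h.
  by apply: (solve_x Sx).
have [nx _] := invol Sx; have := esym h; move/wd1 => e1; subst c1.
by rewrite dcc in e; exfalso; apply: nx.
Qed.

Lemma adj2 c c1 c2 x : S x -> delta c c1 = x -> delta c c2 = x -> c1 <> c2 ->
  delta c1 c2 = x.
Proof.
move=> Sx e1 e2 ne; have e1' := delta_sym_s Sx e1.
have [[h|h] _] := @wd2 c c2 c1 _ Sx e1'; last by rewrite h.
have [_ xx] := invol Sx; rewrite e2 xx in h.
by exfalso; apply: ne; apply/wd1.
Qed.

Lemma two_adj c x : S x -> exists c1 c2, [/\ c1 <> c2, delta c c1 = x & delta c c2 = x].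
Proof.
move=> Sx; have [d1 [d2 [d3 [h1 h2 h3 [n12 n13 n23]]]]] := HT c Sx.
case: h1 => h1.
  have e1 := proj1 (wd1 _ _) h1; subst d1.
  case: h2 => h2; first by exfalso; apply: n12; apply/wd1.
  case: h3 => h3; first by exfalso; apply: n13; apply/wd1.
  by exists d2, d3.
case: h2 => h2.
  have e2 := proj1 (wd1 _ _) h2; subst d2.
  case: h3 => h3; first by exfalso; apply: n23; apply/wd1.
  by exists d1, d3.
by exists d1, d2.
Qed.

Definition injN (f : nat -> C) N := forall i j, (i < N)%N -> (j < N)%N -> f i = f j -> i = j.

Lemma lowerA k : forall w c, coxeter_length mulW oneW S w k ->
  exists f : nat -> C, injN f (2 ^ k) /\ forall i, (i < 2 ^ k)%N -> delta c (f i) = w.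
Proof.
elim: k => [|k IH] w c Hw.
  rewrite (cl0 Hw); exists (fun=> c); split; last by move=> i _; rewrite dcc.
  by move=> [|i] [|j].
have [x [w' [Sx ew Hw']]] := clS Hw; subst w.
have [c1 [c2 [n12 e1 e2]]] := two_adj c Sx.
have [f1 [i1 v1]] := IH w' c1 Hw'.
have [f2 [i2 v2]] := IH w' c2 Hw'.
have val cc (ecc : delta c cc = x) d : delta cc d = w' -> delta c d = mulW x w'.
  move=> hd; have [_ h] := @wd2 cc d c _ Sx ecc; rewrite hd in h |- *.
  exact: h k Hw' Hw.
have disj i j : (i < 2 ^ k)%N -> (j < 2 ^ k)%N -> f1 i <> f2 j.
  move=> hi hj e.
  have a12 := adj2 Sx e1 e2 n12.
  have [_ h] := @wd2 c2 (f2 j) c1 _ Sx a12.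
  rewrite v2 // in h; have := h k Hw' Hw.
  rewrite -e v1 // => ee; rewrite ee in Hw'.
  by have := cl_uniq Hw Hw' => /eqP; rewrite eqn_leq ltnn.
exists (fun i => if (i < 2 ^ k)%N then f1 i else f2 (i - 2 ^ k)%N); split.
  move=> i j; rewrite expnS mul2n -addnn => hi hj.
  case: ifP => hik; case: ifP => hjk.
  - by apply: i1.
  - by move=> e; exfalso; apply: (disj i (j - 2 ^ k)%N) => //; rewrite ltn_subLR // leqNgt hjk.
  - by move=> e; exfalso; apply: (disj j (i - 2 ^ k)%N) => //; rewrite ltn_subLR // leqNgt hik.
  - move=> e; have := i2 _ _ _ _ e.
    move: hik hjk => /negbT; rewrite -leqNgt => hik /negbT; rewrite -leqNgt => hjk.
    rewrite !ltn_subLR //; lia.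
  move=> i hi; case: ifP => hik; first by apply: val e1 _ (v1 _ hik).
  apply: val e2 _ (v2 _ _).
move: hik hi => /negbT; rewrite -leqNgt expnS mul2n -addnn => hik hi.
rewrite ltn_subLR //.
Qed.


Definition WL L := [set w | exists k, (k <= L)%N /\ word_of_length mulW oneW S w k].

Lemma WL_finite L : finite_set S -> finite_set (WL L).
Proof.
move=> fS; elim: L => [|L IH].
  apply: (sub_finite_set _ (finite_set1 oneW)) => w [k [hk [s [Hs _ <-]]]].
  by move: hk; rewrite leqn0 => /eqP hk; subst k; case: s hk.
apply: (sub_finite_set (B := WL L `|` (fun p => mulW p.1 p.2) @` (S `*` WL L))).
  move=> w [k [hk [s [Hs HS <-]]]].
  case: (leqP k L) => hkL; first by left; exists k; split => //; exists s.
  subst k; case: s hk hkL HS => [//|x r] /= hk hkL HS; right.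
  have Hr : size r = L by lia.
  exists (x, wprod mulW oneW r) => //; split => /=; first by apply: (HS 0%N).
  exists L; split => //; exists r; split => // i hi; exact: (HS i.+1).
by rewrite finite_setU; split => //; apply: finite_image; apply: finite_setX.
Qed.

End Bld.
Lemma count_bound (T : Type) (f g : nat -> T) N M :
  (forall i j, (i < N)%N -> (j < N)%N -> f i = f j -> i = j) ->
  (forall i, (i < N)%N -> exists j, (j < M)%N /\ f i = g j) -> (N <= M)%N.
Proof.
move=> finj fg; rewrite -card_le_II.
have e : (f @` `I_N #= `I_N)%card.
  apply: inj_card_eq => i j /set_mem hi /set_mem hj; exact: finj.
rewrite -(card_le_eql e); apply: (card_le_trans (B := g @` `I_M)); last exact: card_image_le.
apply: subset_card_le => x [i hi <-]; have [j [hj ->]] := fg i hi; by exists j.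
Qed.

Lemma cov3 (T : Type) (F : nat -> nat -> nat -> T) a n m (X : set T) :
  (forall x, X x -> exists i j l, [/\ (i < a)%N, (j < n)%N, (l < m)%N & x = F i j l]) ->
  exists g : nat -> T, forall x, X x -> exists t, (t < a * n * m)%N /\ x = g t.
Proof.
move=> h; exists (fun t => F (t %/ m %/ n) (t %/ m %% n) (t %% m)) => x /h [i [j [l [hi hj hl ->]]]].
exists ((i * n + j) * m + l)%N; split.
  have : ((i * n + j) < a * n)%N by nia.
  nia.
have hm : (0 < m)%N by lia.
have hn : (0 < n)%N by lia.
rewrite divnMDl // (divn_small hl) addn0 divnMDl // (divn_small hj) addn0.
by rewrite !modnMDl (modn_small hl) (modn_small hj).
Qed.



Lemma card_surj (T : Type) (x0 : T) (K : set T) n : (K #= `I_n)%card ->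
  exists e : nat -> T, forall k, K k -> exists j, (j < n)%N /\ k = e j.
Proof.
move=> /card_eqPle [h _]; move/pfcard_geP: h => [->|/surjfunPex [e ->]].
  by exists (fun _ => x0) => k.
by exists e => k [j hj <-]; exists j.
Qed.

Lemma compact_bigcup_nat (G : topologicalType) (e : nat -> set G) (P : nat -> Prop) k :
  (forall j, P j -> compact (e j)) ->
  compact (\bigcup_(j in [set j | (j < k)%N /\ P j]) e j).
Proof.
move=> ce; elim: k => [|k IH].
  have -> : \bigcup_(j in [set j | (j < 0)%N /\ P j]) e j = set0.
    by apply/seteqP; split => x // [j [] //].
  exact: compact0.
case: (pselect (P k)) => Pk.
  have -> : \bigcup_(j in [set j | (j < k.+1)%N /\ P j]) e j =
      \bigcup_(j in [set j | (j < k)%N /\ P j]) e j `|` e k.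
    apply/seteqP; split => x.
      move=> [j [hj Pj] ex]; case: (ltngtP j k) => hjk.
      - by left; exists j.
      - by exfalso; lia.
      - by right; rewrite -hjk.
    by move=> [[j [hj Pj] ex]|ex]; [exists j => //; split => //; lia | exists k].
  by apply: compactU => //; apply: ce.
have -> : \bigcup_(j in [set j | (j < k.+1)%N /\ P j]) e j =
    \bigcup_(j in [set j | (j < k)%N /\ P j]) e j.
  apply/seteqP; split => x.
    move=> [j [hj Pj] ex]; exists j => //; split => //.
    case: (ltngtP j k) => hjk //; [lia | by subst j].
  by move=> [j [hj Pj] ex]; exists j => //; split => //; lia.
exact: IH.
Qed.

Lemma compact_fin_union (G : topologicalType) (F : set (set G)) :
  finite_set F -> (forall D, F D -> compact D) -> compact (\bigcup_(D in F) D).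
Proof.
move=> /finite_setP [k hk] cF.
have [e he] := card_surj set0 hk.
have -> : \bigcup_(D in F) D = \bigcup_(j in [set j | (j < k)%N /\ F (e j)]) e j.
  apply/seteqP; split => x.
    by move=> [D FD Dx]; have [j [hj eD]] := he D FD; exists j; [split => //; rewrite -eD | rewrite -eD].
  by move=> [j [_ Fj] ex]; exists (e j).
by apply: compact_bigcup_nat => j; apply: cF.
Qed.
Section Grp.
Variables (G : topologicalType) (mul : G -> G -> G) (one : G) (inv : G -> G).
Hypothesis HG : topological_group mul one inv.
Definition Gp : Type := G.
HB.instance Definition _ := Topological.copy Gp G.
HB.instance Definition _ := isPointed.Build Gp one.

Lemma mulA : associative mul. Proof. by case: HG => [[]]. Qed.
Lemma mul1g : left_id one mul. Proof. by case: HG => [[]]. Qed.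
Lemma mulg1 : right_id one mul. Proof. by case: HG => [[]]. Qed.
Lemma mulVg : left_inverse one inv mul. Proof. by case: HG => [[]]. Qed.
Lemma mulgV : right_inverse one inv mul. Proof. by case: HG => [[]]. Qed.

Lemma mulKg a x : mul (inv a) (mul a x) = x. Proof. by rewrite mulA mulVg mul1g. Qed.
Lemma mulKVg a x : mul a (mul (inv a) x) = x. Proof. by rewrite mulA mulgV mul1g. Qed.
Lemma mulgK a x : mul (mul x a) (inv a) = x. Proof. by rewrite -mulA mulgV mulg1. Qed.
Lemma mulgKV a x : mul (mul x (inv a)) a = x. Proof. by rewrite -mulA mulVg mulg1. Qed.
Lemma invM a b : inv (mul a b) = mul (inv b) (inv a).
Proof.
have e : mul (mul a b) (mul (inv b) (inv a)) = one by rewrite mulA mulgK mulgV.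
by rewrite -[LHS]mulg1 -e mulA mulVg mul1g.
Qed.
Lemma invK a : inv (inv a) = a.
Proof. by rewrite -[LHS]mulg1 -(mulVg a) mulA mulVg mul1g. Qed.

Lemma cont_mul : continuous (fun p : G * G => mul p.1 p.2). Proof. by case: HG. Qed.

Lemma cont_lmul g : continuous (fun y => mul g y).
Proof.
move=> y; apply: (@continuous_comp _ _ _ (fun y => (g, y)) (fun p : G * G => mul p.1 p.2)).
  by apply: cvg_pair => //; apply: cvg_cst.
exact: cont_mul.
Qed.

Lemma cont_rmul g : continuous (fun y => mul y g).
Proof.
move=> y; apply: (@continuous_comp _ _ _ (fun y => (y, g)) (fun p : G * G => mul p.1 p.2)).
  by apply: cvg_pair => //; apply: cvg_cst.
exact: cont_mul.
Qed.

Definition rcoset (U : set G) (g : G) := [set mul u g | u in U].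

Lemma lcosetE g U : lcoset mul g U = (fun y => mul (inv g) y) @^-1` U.
Proof.
apply/seteqP; split => x /=.
  by case=> u Uu <-; rewrite mulKg.
by move=> h; exists (mul (inv g) x) => //; rewrite mulKVg.
Qed.

Lemma rcosetE g U : rcoset U g = (fun y => mul y (inv g)) @^-1` U.
Proof.
apply/seteqP; split => x /=.
  by case=> u Uu <-; rewrite mulgK.
by move=> h; exists (mul x (inv g)) => //; rewrite mulgKV.
Qed.

Lemma open_lcoset g U : open U -> open (lcoset mul g U).
Proof. by move=> oU; rewrite lcosetE; apply: open_comp => // y _; apply: cont_lmul. Qed.
Lemma open_rcoset g U : open U -> open (rcoset U g).
Proof. by move=> oU; rewrite rcosetE; apply: open_comp => // y _; apply: cont_rmul. Qed.

Lemma compact_lcoset g U : compact U -> compact (lcoset mul g U).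
Proof. by move=> cU; apply: continuous_compact => //; apply: continuous_subspaceT; apply: cont_lmul. Qed.

Lemma fin_cover (A : set G) (f : G -> set G) : compact A ->
  (forall x, open (f x)) -> (forall x, A x -> f x x) ->
  exists a (b : nat -> G), (forall i, (i < a)%N -> A (b i)) /\
    forall x, A x -> exists i, (i < a)%N /\ f (b i) x.
Proof.
move=> cA hop fx; have {cA}cA : @compact Gp A := cA.
rewrite compact_cover in cA.
have [] := cA G A f (fun i _ => hop i).
  by move=> x Ax; exists x => //; apply: fx.
move=> D' sD cov.
exists (size (enum_fset D')), (fun i => nth one (enum_fset D') i); split.
  move=> i hi; have : nth one (enum_fset D') i \in D' by exact: (mem_nth one hi).
  by move=> /sD /set_mem.
move=> x /cov [y yD fy]; exists (index y (enum_fset D')); split.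
  by rewrite index_mem. 
by rewrite nth_index.
Qed.


Section Sub.
Variable O : set G.
Hypothesis HO : is_subgroup mul one inv O.
Lemma O1 : O one. Proof. by case: HO. Qed.
Lemma OM x y : O x -> O y -> O (mul x y). Proof. by case: HO => _ h _; apply: h. Qed.
Lemma OV x : O x -> O (inv x). Proof. by case: HO => _ _ h; apply: h. Qed.

Lemma dc_absorb z u1 u2 : O u1 -> O u2 ->
  double_coset mul O (mul (mul u1 z) u2) = double_coset mul O z.
Proof.
move=> O1' O2'; apply/seteqP; split => x.
  case=> a Oa [b Ob <-]; exists (mul a u1); first exact: OM.
  by exists (mul u2 b); [exact: OM | rewrite !mulA].
case=> a Oa [b Ob <-]; exists (mul a (inv u1)); first by apply: OM => //; apply: OV.
exists (mul (inv u2) b); first by apply: OM => //; apply: OV.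
by rewrite !mulA mulgKV -!mulA mulKVg.
Qed.

Lemma dc_mem g : double_coset mul O g g.
Proof. by exists one; [exact: O1|exists one; [exact: O1| by rewrite mulg1 mul1g]]. Qed.

Lemma lcoset_self g : lcoset mul g O g.
Proof. by exists one; [exact: O1 | rewrite mulg1]. Qed.

Lemma lcoset_absorb g o : O o -> lcoset mul (mul g o) O = lcoset mul g O.
Proof.
move=> Oo; apply/seteqP; split => x.
  by case=> y Oy <-; exists (mul o y); [exact: OM | rewrite mulA].
case=> y Oy <-; exists (mul (inv o) y); first by apply: OM => //; apply: OV.
by rewrite -mulA mulKVg.
Qed.

Lemma lcoset_dc g y : O y -> lcoset mul (mul g y) O `<=` double_coset mul O g.
Proof.
move=> Oy x [z Oz <-]; exists one; first exact: O1.
by exists (mul y z); [exact: OM | rewrite mul1g mulA].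
Qed.

Lemma N_dc g : normaliser mul inv O g -> double_coset mul O g = lcoset mul g O.
Proof.
move=> Ng; apply/seteqP; split => x.
  case=> a Oa [b Ob <-].
  have h : O (mul (mul (inv g) a) g).
    apply/(Ng (mul (mul (inv g) a) g)).
    by rewrite mulA mulgK mulKVg.
  by exists (mul (mul (mul (inv g) a) g) b); [exact: OM | rewrite !mulA mulgV mul1g].
case=> o Oo <-; exists one; first exact: O1.
by exists o => //; rewrite mul1g.
Qed.

Lemma haar_lcoset g : haar_measure_is mul O (lcoset mul g O) 1.
Proof.
rewrite /haar_measure_is.
have -> : [set K | exists h, K = lcoset mul h O /\ K `<=` lcoset mul g O] = [set lcoset mul g O].
  apply/seteqP; split => K /=.
    case=> h [-> hs]; have := hs h (lcoset_self h); case=> o Oo <-.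
    exact: lcoset_absorb.
  by move=> ->; exists g; split.
exact: card_set1.
Qed.

Lemma N_mul g o : normaliser mul inv O g -> O o -> normaliser mul inv O (mul g o).
Proof.
move=> Ng Oo x; rewrite invM.
have -> : mul (mul (mul g o) x) (mul (inv o) (inv g)) = mul (mul g (mul (mul o x) (inv o))) (inv g).
  by rewrite !mulA.
rewrite -Ng; split => h.
  by apply: OM; [apply: OM|apply: OV].
have := OM (OM (OV Oo) h) Oo; by rewrite !mulA mulVg mul1g mulgKV.
Qed.

End Sub.

Lemma dcp_Ncompact : double_coset_property mul one inv -> N_compact mul one inv.
Proof.
move=> dcp O [HO cO oO].
set N := normaliser mul inv O.
have fin := dcp O (And3 HO cO oO) 1%N isT.
set D' := [set D | exists g, N g /\ D = lcoset mul g O].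
have fD' : finite_set D'.
  apply: sub_finite_set fin => D [g [Ng ->]]; split; last exact: haar_lcoset.
  by exists g; rewrite N_dc.
have -> : N = \bigcup_(D in D') D.
  apply/seteqP; split => x.
    by move=> Nx; exists (lcoset mul x O); [exists x | exact: lcoset_self].
  by move=> [D [g [Ng ->]] [z Oz <-]]; apply: N_mul.
apply: compact_fin_union => // D [g [_ ->]]; exact: compact_lcoset.
Qed.


Section Main.
Variables (W : Type) (mulW : W -> W -> W) (oneW : W) (invW : W -> W) (S : set W)
  (C : Type) (delta : C -> C -> W) (rho : G -> C -> C) (c0 : C).
Hypotheses (HW : coxeter_system mulW oneW invW S) (fS : finite_set S)
  (HB : is_building mulW oneW S delta) (HT : thick_building oneW S delta)
  (Hact : type_preserving_action mul one delta rho) (Hcont : perm_continuous rho)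
  (Hcpt : compact_stabilisers rho) (Hwt : weyl_transitive delta rho).

Lemma rho1 c : rho one c = c. Proof. by case: Hact. Qed.
Lemma rhoM g h c : rho (mul g h) c = rho g (rho h c). Proof. by case: Hact. Qed.
Lemma rhoV g c : rho (inv g) (rho g c) = c. Proof. by rewrite -rhoM mulVg rho1. Qed.

Definition Bst := [set g | rho g c0 = c0].
Lemma B_open : open Bst.
Proof.
rewrite openE => b Bb; have := Hcont b (finite_set1 c0).
by apply: filterS => h hh; rewrite /Bst /= (hh c0 erefl).
Qed.
Lemma B1 : Bst one. Proof. exact: rho1. Qed.
Lemma BV g : Bst g -> Bst (inv g).
Proof. by rewrite /Bst /= => h; rewrite -{1}h rhoV. Qed.

Theorem dcp : double_coset_property mul one inv.
Proof.
move=> O [HO cO oO] n hn.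
have cB : compact Bst by apply: Hcpt.
pose U := O `&` Bst.
have oU : open U := openI oO B_open.
have U1 : U one by split; [exact: O1 | exact: B1].
have selfL x : lcoset mul x U x by exists one => //; rewrite mulg1.
have selfR x : rcoset U x x by exists one => //; rewrite mul1g.
have [a [bL [bLB covL]]] := fin_cover (A := Bst) (f := fun x => lcoset mul x U) cB
   (fun x => open_lcoset x oU) (fun x _ => selfL x).
have [a' [bR [bRB covR]]] := fin_cover (A := Bst) (f := fun x => rcoset U x) cB
   (fun x => open_rcoset x oU) (fun x _ => selfR x).
have [m [oL [oLO covO]]] := fin_cover (A := O) (f := fun x => lcoset mul x U) cO
   (fun x => open_lcoset x oU) (fun x _ => selfL x).
have [gw Hgw] : {gw : W -> G & forall w,
    (exists g, delta c0 (rho g c0) = w) -> delta c0 (rho (gw w) c0) = w}.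
  apply: (choice (P := fun w g' => (exists g, delta c0 (rho g c0) = w) -> delta c0 (rho g' c0) = w)) => w.
  case: (pselect (exists g, delta c0 (rho g c0) = w)) => [[g hg]|nh]; first by exists g.
  by exists one.
pose M := (a * n * m)%N.
apply: (sub_finite_set (B := (fun p : W * (nat * nat) =>
   double_coset mul O (mul (mul (bR p.2.1) (gw p.1)) (bL p.2.2))) @`
   (WL mulW oneW S M `*` (`I_a' `*` `I_a)))); last first.
  apply: finite_image; apply: finite_setX; first exact: WL_finite.
  by apply: finite_setX; apply: finite_II.
move=> D [[g ->] hD].
pose w := delta c0 (rho g c0).
have [e he] := card_surj set0 hD.
have [hr Hhr] : {hr : set G -> G & forall K,
    (exists h, K = lcoset mul h O /\ K `<=` double_coset mul O g) -> K = lcoset mul (hr K) O}.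
  apply: (choice (P := fun K h' => (exists h, K = lcoset mul h O /\ K `<=` double_coset mul O g) -> K = lcoset mul h' O)) => K.
  case: (pselect (exists h, K = lcoset mul h O /\ K `<=` double_coset mul O g)) => [[h [hK _]]|nh].
    by exists h.
  by exists one => hh; exfalso; apply: nh.
have Xcov : forall d, delta c0 d = w -> exists i j l,
    [/\ (i < a)%N, (j < n)%N, (l < m)%N & d = rho (bL i) (rho (hr (e j)) (rho (oL l) c0))].
  move=> d hd.
  have [h [hc0 hd']] := Hwt (esym hd).
  have [i [hi [u Uu ehu]]] := covL h hc0.
  have K0in : exists h0, lcoset mul (mul u g) O = lcoset mul h0 O /\
                lcoset mul (mul u g) O `<=` double_coset mul O g.
    exists (mul u g); split => // x [z Oz <-].
    by exists u; [exact: Uu.1 | exists z].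
  have [j [hj ej]] := he _ K0in.
  rewrite ej in K0in; have Hej := Hhr _ K0in.
  have : lcoset mul (hr (e j)) O (mul u g) by rewrite -Hej -ej; exact: lcoset_self.
  case=> z Oz eo.
  have [l [hl [u' Uu' eu']]] := covO z Oz.
  exists i, j, l; split => //.
  rewrite -hd' -ehu rhoM; congr (rho (bL i) _).
  by rewrite -rhoM -eo -eu' !rhoM Uu'.2.
have [F3 HF3] := cov3 Xcov.
have [k hk] := cl_exists HW w.
have [f [finj fv]] := lowerA HW HB HT c0 hk.
have bound : (2 ^ k <= a * n * m)%N.
  apply: (count_bound (f := f) (g := F3)) => // i hi.
  by have [t [ht eq]] := HF3 _ (fv i hi); exists t.
have kM : (k <= M)%N := leq_trans (ltnW (ltn_expl k (isT : (1 < 2)%N))) bound.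
have hgw : delta c0 (rho (gw w) c0) = delta c0 (rho g c0) by apply: Hgw; exists g.
have [h [hc0 hh]] := Hwt hgw.
pose b := mul (mul (inv g) h) (gw w).
have Bb : Bst b by rewrite /Bst /= /b !rhoM hh rhoV.
have Bib : Bst (inv b) := BV Bb.
have eg : g = mul (mul h (gw w)) (inv b).
  by rewrite /b !invM invK !mulA mulgK mulgV mul1g.
have [i [hi [u1 Uu1 e1]]] := covR h hc0.
have [j [hj [u2 Uu2 e2]]] := covL (inv b) Bib.
exists (w, (i, j)).
  split; first by exists k; split => //; case: hk.
  by split.
rewrite /= [in RHS]eg -e1 -e2.
rewrite -(dc_absorb HO _ Uu1.1 Uu2.1); congr (double_coset mul O _).
by rewrite !mulA.
Qed.

End Main.
End Grp.

Unset Implicit Arguments.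

Theorem proposition4p1
  (G : topologicalType) (mul : G -> G -> G) (one : G) (inv : G -> G)
  (W : Type) (mulW : W -> W -> W) (oneW : W) (invW : W -> W) (S : set W)
  (C : Type) (delta : C -> C -> W) (rho : G -> C -> C) :
  topological_group mul one inv ->
  tdlc G ->
  coxeter_system mulW oneW invW S ->
  finite_set S ->
  is_building mulW oneW S delta ->
  locally_finite_building S delta ->
  thick_building oneW S delta ->
  type_preserving_action mul one delta rho ->
  perm_continuous rho ->
  compact_stabilisers rho ->
  weyl_transitive delta rho ->
  double_coset_property mul one inv /\ N_compact mul one inv.
Proof.
move=> HG _ HW fS HB _ HT Hact Hcont Hcpt Hwt.
have [[c0 _] _ _ _] := HB.
have D := dcp HG c0 HW fS HB HT Hact Hcont Hcpt Hwt.
split => //; exact: dcp_Ncompact HG D.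
Qed.
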